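(* Assume the Continuum Hypothesis. Let $G$ be an uncountable abelian Polish group. Then there exists a set $X\subseteq G$ such that both $X$ and $G\setminus X$ are naively Haar meager. In particular, the naively Haar meager subsets of $G$ do not form an ideal.
   Context: Let $G$ be a Polish group. A set $X\subseteq G$ is called naively Haar meager if there are a compact metrizable space $K$ and a continuous map $f\colon K\to G$ such that $f^{-1}(gXh)$ is meager in $K$ for every $g,h\in G$. *)

(* Defs.v *)
From Stdlib Require Import Reals List.
Open Scope R_scope.

Definition is_metric {X : Type} (d : X -> X -> R) : Prop :=
  (forall x y, 0 <= d x y) /\
  (forall x y, d x y = 0 <-> x = y) /\
  (forall x y, d x y = d y x) /\
  (forall x y z, d x z <= d x y + d y z).

Definition open_set {X : Type} (d : X -> X -> R) (U : X -> Prop) : Prop :=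
  forall x, U x -> exists eps, 0 < eps /\ forall y, d x y < eps -> U y.

Definition closure {X : Type} (d : X -> X -> R) (A : X -> Prop) : X -> Prop :=
  fun x => forall eps, 0 < eps -> exists y, A y /\ d x y < eps.

Definition nowhere_dense {X : Type} (d : X -> X -> R) (A : X -> Prop) : Prop :=
  ~ exists (U : X -> Prop), open_set d U /\ (exists x, U x) /\
      (forall x, U x -> closure d A x).

Definition meager {X : Type} (d : X -> X -> R) (A : X -> Prop) : Prop :=
  exists An : nat -> X -> Prop,
    (forall n, nowhere_dense d (An n)) /\
    (forall x, A x -> exists n, An n x).

Definition compact_space {X : Type} (d : X -> X -> R) : Prop :=
  forall (I : Type) (U : I -> X -> Prop),
    (forall i, open_set d (U i)) -> (forall x, exists i, U i x) ->
    exists l : list I, forall x, exists i, In i l /\ U i x.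

Definition continuous_map {X Y : Type} (dX : X -> X -> R) (dY : Y -> Y -> R)
  (f : X -> Y) : Prop :=
  forall x eps, 0 < eps -> exists delta, 0 < delta /\
    forall x', dX x x' < delta -> dY (f x) (f x') < eps.

Definition cauchy_seq {X : Type} (d : X -> X -> R) (u : nat -> X) : Prop :=
  forall eps, 0 < eps -> exists N, forall m n, (N <= m)%nat -> (N <= n)%nat ->
    d (u m) (u n) < eps.

Definition complete_metric {X : Type} (d : X -> X -> R) : Prop :=
  forall u, cauchy_seq d u -> exists l, forall eps, 0 < eps ->
    exists N, forall n, (N <= n)%nat -> d (u n) l < eps.

Definition separable_metric {X : Type} (d : X -> X -> R) : Prop :=
  exists s : nat -> X, forall x eps, 0 < eps -> exists n, d x (s n) < eps.

Definition polish_group {G : Type} (mul : G -> G -> G) (inv : G -> G) (e : G)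
  (d : G -> G -> R) : Prop :=
  (forall x y z, mul x (mul y z) = mul (mul x y) z) /\
  (forall x, mul e x = x /\ mul x e = x) /\
  (forall x, mul (inv x) x = e /\ mul x (inv x) = e) /\
  is_metric d /\ complete_metric d /\ separable_metric d /\
  (forall x y eps, 0 < eps -> exists delta, 0 < delta /\
     forall x' y', d x x' < delta -> d y y' < delta ->
       d (mul x y) (mul x' y') < eps) /\
  continuous_map d d inv.

Definition abelian {G : Type} (mul : G -> G -> G) : Prop :=
  forall x y, mul x y = mul y x.

Definition uncountable (T : Type) : Prop :=
  ~ exists f : T -> nat, forall x y, f x = f y -> x = y.

Definition translate2 {G : Type} (mul : G -> G -> G) (g h : G) (X : G -> Prop)
  : G -> Prop :=
  fun y => exists x, X x /\ y = mul (mul g x) h.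

Definition naively_haar_meager {G : Type} (mul : G -> G -> G)
  (d : G -> G -> R) (X : G -> Prop) : Prop :=
  exists (K : Type) (dK : K -> K -> R) (f : K -> G),
    is_metric dK /\ compact_space dK /\ (exists k : K, True) /\
    continuous_map dK d f /\
    forall g h, meager dK (fun k => translate2 mul g h X (f k)).

Definition CH : Prop :=
  forall A : R -> Prop,
    (exists f : {x : R | A x} -> nat, forall a b, f a = f b -> a = b) \/
    (exists f : R -> {x : R | A x},
       (forall a b, f a = f b -> a = b) /\ (forall y, exists a, f a = y)).

(* Main.v *)
Require Import Defs.
From Stdlib Require Import Reals.
From Stdlib Require Import Lra Lia List Arith ClassicalEpsilon Classical FunctionalExtensionality ProofIrrelevance Cantor.
Open Scope R_scope.

Module WOR.
From HB Require Import structures.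
From mathcomp Require Import ssreflect ssrfun ssrbool eqtype boolp wochoice.
Definition RR : Type := R.
HB.instance Definition _ := gen_eqMixin RR.

Lemma wo_R_aux : exists W : R -> R -> Prop,
  (forall x y, W x y \/ W y x) /\ (forall x y, W x y -> W y x -> x = y) /\
  (forall P : R -> Prop, (exists x, P x) -> exists z, P z /\ forall x, P x -> W z x).
Proof.
have [Rl wo] := well_ordering_principle RR.
have Rrefl : forall x : RR, Rl x x = true.
  move=> x.
  have ne : nonempty (T:=RR) (fun z => `[< z = x >]).
    by exists x; rewrite /in_mem /=; apply/asboolP.
  have [z [[zin zlb] _]] := wo _ ne.
  move: zin; rewrite /in_mem /= => /asboolP Ez; rewrite Ez in zlb.
  by apply: zlb; rewrite /in_mem /=; apply/asboolP.
exists (fun x y => Rl x y = true).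
split; [|split].
- move=> x y.
  have ne : nonempty (T:=RR) (fun z => `[< z = x \/ z = y >]).
    by exists x; rewrite /in_mem /=; apply/asboolP; left.
  have [z [[zin zlb] _]] := wo _ ne.
  move: zin; rewrite /in_mem /= => /asboolP [] Ez; rewrite Ez in zlb.
  + by left; apply: zlb; rewrite /in_mem /=; apply/asboolP; right.
  + by right; apply: zlb; rewrite /in_mem /=; apply/asboolP; left.
- move=> x y Hxy Hyx.
  have ne : nonempty (T:=RR) (fun z => `[< z = x \/ z = y >]).
    by exists x; rewrite /in_mem /=; apply/asboolP; left.
  have [z [[zin zlb] zu]] := wo _ ne.
  have E1 : z = x.

    apply: (zu); split; first by rewrite /in_mem /=; apply/asboolP; left.
    move=> v; rewrite /in_mem /= => /asboolP [] Ew; rewrite Ew //; exact: Rrefl.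
  have E2 : z = y.
    apply: (zu); split; first by rewrite /in_mem /=; apply/asboolP; right.
    move=> v2; rewrite /in_mem /= => /asboolP [] Ev2; rewrite Ev2 //; exact: Rrefl.
  exact (Logic.eq_trans (Logic.eq_sym E1) E2).
- move=> P [x Px].
  have ne : nonempty (T:=RR) (fun z => `[< P z >]).
    by exists x; rewrite /in_mem /=; apply/asboolP.
  have [z [[zin zlb] _]] := wo _ ne.
  exists z; split; first by move: zin; rewrite /in_mem /= => /asboolP.
  move=> w Pw; apply: zlb; rewrite /in_mem /=; exact/asboolP.
Qed.
End WOR.

Lemma wo_R : exists W : R -> R -> Prop,
  (forall x y, W x y \/ W y x) /\ (forall x y, W x y -> W y x -> x = y) /\
  (forall P : R -> Prop, (exists x, P x) -> exists z, P z /\ forall x, P x -> W z x).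
Proof. exact WOR.wo_R_aux. Qed.


Definition K := nat -> bool.
Definition agree (n:nat) (a b : K) := forall k, (k < n)%nat -> a k = b k.

Lemma least_ex (P : nat -> Prop) n : P n -> exists m, P m /\ forall k, (k < m)%nat -> ~ P k.
Proof.
  revert P. induction n as [n IH] using (well_founded_induction Wf_nat.lt_wf). intros P Pn.
  destruct (classic (exists k, (k < n)%nat /\ P k)) as [[k [Hk Pk]]|H].
  - exact (IH k Hk P Pk).
  - exists n. split; auto. intros k Hk Pk. apply H. eauto.
Qed.

Lemma first_diff (a b : K) : a <> b -> exists m, a m <> b m /\ agree m a b.
Proof.
  intros H. destruct (classic (exists k, a k <> b k)) as [[k Hk]|H2].
  - destruct (least_ex (fun k => a k <> b k) k Hk) as [m [Hm1 Hm2]].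
    exists m. split; auto. intros j Hj. apply NNPP. apply Hm2. auto.
  - exfalso. apply H. apply functional_extensionality. intros x. apply NNPP. intro. apply H2. eauto.
Qed.

Definition fd (a b : K) : nat := epsilon (inhabits 0%nat) (fun m => a m <> b m /\ agree m a b).

Lemma fd_spec a b : a <> b -> a (fd a b) <> b (fd a b) /\ agree (fd a b) a b.
Proof. intros H. unfold fd. apply epsilon_spec. apply first_diff; auto. Qed.

Lemma fd_unique a b m : a m <> b m -> agree m a b -> fd a b = m.
Proof.
  intros H1 H2. assert (a <> b) by (intro E; subst; auto).
  destruct (fd_spec a b H) as [F1 F2].
  destruct (Nat.lt_trichotomy (fd a b) m) as [L|[L|L]]; auto.
  - exfalso. apply F1. apply H2. auto.
  - exfalso. apply H1. apply F2. auto.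
Qed.

Definition dK (a b : K) : R :=
  if excluded_middle_informative (a = b) then 0 else / 2 ^ (fd a b).

Lemma dK_neq a b : a <> b -> dK a b = / 2 ^ fd a b.
Proof. intros H. unfold dK. destruct (excluded_middle_informative (a = b)); tauto. Qed.
Lemma dK_eq a : dK a a = 0.
Proof. unfold dK. destruct (excluded_middle_informative (a = a)); tauto. Qed.

Lemma pow2_pos n : 0 < 2 ^ n.
Proof. apply pow_lt. lra. Qed.

Lemma inv_pow2_le n m : (n <= m)%nat -> / 2 ^ m <= / 2 ^ n.
Proof.
  intros H. apply Rinv_le_contravar. apply pow2_pos. apply Rle_pow; [lra|auto].
Qed.

Lemma inv_pow2_lt n m : (n < m)%nat -> / 2 ^ m < / 2 ^ n.
Proof.
  intros H. apply Rinv_lt_contravar. apply Rmult_lt_0_compat; apply pow2_pos.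
  apply Rlt_pow; [lra|auto].
Qed.

Lemma inv_pow2_pos n : 0 < / 2 ^ n.
Proof. apply Rinv_0_lt_compat, pow2_pos. Qed.

Lemma small_pow2 eps : 0 < eps -> exists n, / 2 ^ n < eps.
Proof.
  intros H. destruct (pow_lt_1_zero (/2) ltac:(rewrite Rabs_pos_eq; lra) eps H) as [N HN].
  exists N. specialize (HN N (le_n N)). rewrite Rabs_pos_eq in HN.
  - rewrite pow_inv in HN. auto.
  - apply pow_le. lra.
Qed.

Lemma dK_le a b n : dK a b <= / 2 ^ n <-> agree n a b.
Proof.
  unfold dK. destruct (excluded_middle_informative (a = b)) as [E|E].
  - subst. split; intros; [intros k _; auto | left; apply inv_pow2_pos].
  - destruct (fd_spec a b E) as [F1 F2]. split; intros H.
    + intros k Hk. apply F2. destruct (le_lt_dec n (fd a b)) as [L|L]. lia.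
      exfalso. pose proof (inv_pow2_lt _ _ L). lra.
    + apply inv_pow2_le. destruct (le_lt_dec n (fd a b)) as [L|L]; auto.
      exfalso. apply F1. apply H. auto.
Qed.

Lemma dK_lt a b n : dK a b < / 2 ^ n -> agree (S n) a b.
Proof.
  unfold dK. destruct (excluded_middle_informative (a = b)) as [E|E].
  - subst. intros; intros k _; auto.
  - destruct (fd_spec a b E) as [F1 F2]. intros H k Hk. apply F2.
    destruct (le_lt_dec (fd a b) n) as [L|L]. 
    + exfalso. pose proof (inv_pow2_le _ _ L). lra.
    + lia.
Qed.

Lemma dK_ge a b k : a k <> b k -> / 2 ^ k <= dK a b.
Proof.
  intros H. assert (E : a <> b) by (intro; subst; auto). rewrite dK_neq; auto.
  - destruct (fd_spec a b E) as [F1 F2]. apply inv_pow2_le.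
    destruct (le_lt_dec (fd a b) k) as [L|L]; auto. exfalso. apply H. apply F2. auto.
Qed.

Lemma dK_nonneg a b : 0 <= dK a b.
Proof. unfold dK. destruct (excluded_middle_informative (a = b)). lra. left; apply inv_pow2_pos. Qed.

Lemma dK_metric : is_metric dK.
Proof.
  split; [|split; [|split]].
  - apply dK_nonneg.
  - intros x y. unfold dK. destruct (excluded_middle_informative (x = y)) as [E|E].
    + tauto.
    + split; intros H; [|tauto]. exfalso. pose proof (inv_pow2_pos (fd x y)). lra.
  - intros x y. unfold dK.
    destruct (excluded_middle_informative (x = y)) as [E|E];
    destruct (excluded_middle_informative (y = x)) as [E'|E']; try (subst; tauto).
    destruct (fd_spec x y E) as [F1 F2]. rewrite (fd_unique y x (fd x y)); auto.
    intros k Hk. symmetry. auto.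
  - intros x y z. destruct (classic (x = z)) as [E|E].
    + unfold dK at 1. destruct (excluded_middle_informative (x = z)); [|tauto].
      pose proof (dK_nonneg x y). pose proof (dK_nonneg y z). lra.
    + destruct (fd_spec x z E) as [F1 F2].
      assert (dK x z = / 2 ^ fd x z) as Hd.
      { unfold dK. destruct (excluded_middle_informative (x = z)); tauto. }
      rewrite Hd. pose proof (dK_nonneg x y). pose proof (dK_nonneg y z).
      destruct (Bool.bool_dec (x (fd x z)) (y (fd x z))) as [B|B].
      * assert (y (fd x z) <> z (fd x z)) by congruence.
        pose proof (dK_ge y z _ H1). lra.
      * pose proof (dK_ge x y _ B). lra.
Qed.

Definition upd (p : K) (n : nat) (v : bool) : K := fun k => if Nat.eqb k n then v else p k.

Lemma agree_trans n a b c : agree n a b -> agree n b c -> agree n a c.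
Proof. intros H1 H2 k Hk. rewrite H1; auto. Qed.
Lemma agree_sym n a b : agree n a b -> agree n b a.
Proof. intros H k Hk. symmetry; auto. Qed.
Lemma agree_mono n m a b : (m <= n)%nat -> agree n a b -> agree m a b.
Proof. intros L H k Hk. apply H. lia. Qed.

Lemma dK_compact : compact_space dK.
Proof.
  intros I U HU Hcov. apply NNPP. intros Hno.
  set (good := fun n p => exists l : list I, forall x, agree n x p -> exists i, In i l /\ U i x).
  assert (Hsplit : forall n p, good (S n) (upd p n false) -> good (S n) (upd p n true) -> good n p).
  { intros n p [l1 H1] [l2 H2]. exists (l1 ++ l2). intros x Hx.
    destruct (x n) eqn:Hxn.
    - destruct (H2 x) as [i [Hi Ui]].
      + intros k Hk. unfold upd. destruct (Nat.eqb_spec k n). subst; auto. apply Hx. lia.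
      + exists i. split; auto. apply in_or_app. auto.
    - destruct (H1 x) as [i [Hi Ui]].
      + intros k Hk. unfold upd. destruct (Nat.eqb_spec k n). subst; auto. apply Hx. lia.
      + exists i. split; auto. apply in_or_app. auto. }
  set (pre := fix pre (n : nat) : K := match n with
    | O => fun _ => false
    | S n => if excluded_middle_informative (good (S n) (upd (pre n) n false))
             then upd (pre n) n true else upd (pre n) n false end).
  assert (Hbad : forall n, ~ good n (pre n)).
  { induction n as [|n IH].
    - intros [l Hl]. apply Hno. exists l. intros x. apply Hl. intros k Hk. lia.
    - simpl. destruct (excluded_middle_informative (good (S n) (upd (pre n) n false))) as [G|G].
      + intros G2. apply IH. apply Hsplit; auto.
      + auto. }
  assert (Hpre : forall n k, (k < n)%nat -> pre n k = pre (S k) k).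
  { induction n as [|n IH]; intros k Hk. lia.
    assert (E : forall v, upd (pre n) n v k = if Nat.eqb k n then v else pre n k) by reflexivity.
    simpl pre at 1.
    destruct (Nat.eqb_spec k n) as [Ek|Ek].
    - subst. reflexivity.
    - destruct (excluded_middle_informative (good (S n) (upd (pre n) n false)));
      rewrite E; destruct (Nat.eqb_spec k n); try tauto; apply IH; lia. }
  set (a := fun k => pre (S k) k).
  destruct (Hcov a) as [i Ui].
  destruct (HU i a Ui) as [eps [Heps Hball]].
  destruct (small_pow2 eps Heps) as [n Hn].
  apply (Hbad n). exists (i :: nil). intros x Hx. exists i. split. left; auto.
  apply Hball. apply Rle_lt_trans with (/ 2 ^ n); auto. apply dK_le.
  intros k Hk. rewrite Hx; auto. unfold a. symmetry. apply Hpre. auto.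
Qed.

Lemma subsingleton_nd (S : K -> Prop) : (forall x y, S x -> S y -> x = y) -> nowhere_dense dK S.
Proof.
  intros Hs [V [HV [[x0 Vx0] Hcl]]].
  destruct (HV x0 Vx0) as [eps [Heps Hball]].
  assert (Hnear : forall z, dK x0 z < eps -> forall y, S y -> z = y).
  { intros z Hz y Sy. apply Hball in Hz. apply Hcl in Hz.
    destruct dK_metric as [M1 [M2 _]]. apply M2.
    apply Rle_antisym; [|apply M1]. apply Rnot_lt_le. intros Hlt.
    destruct (Hz (dK z y) Hlt) as [y' [Sy' Hy']]. rewrite (Hs y' y Sy' Sy) in Hy'. lra. }
  destruct (Hcl x0 Vx0 1 ltac:(lra)) as [y0 [Sy0 _]].
  destruct (small_pow2 eps Heps) as [n Hn].
  set (z := upd x0 n (negb (x0 n))).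
  assert (E1 : x0 = y0).
  { apply Hnear; auto. destruct dK_metric as [_ [M2 _]]. rewrite (proj2 (M2 x0 x0) eq_refl). auto. }
  assert (E2 : z = y0).
  { apply Hnear; auto. apply Rle_lt_trans with (/2^n); auto. apply dK_le.
    intros k Hk. unfold z, upd. destruct (Nat.eqb_spec k n). lia. auto. }
  assert (z n = x0 n) by congruence. unfold z, upd in H. rewrite Nat.eqb_refl in H.
  destruct (x0 n); discriminate.
Qed.


Section Baire.
Variable X : Type.
Variable d : X -> X -> R.
Hypothesis Hm : is_metric d.

Lemma m_nonneg x y : 0 <= d x y. Proof. apply Hm. Qed.
Lemma m_refl x : d x x = 0. Proof. apply (proj1 (proj2 Hm)). auto. Qed.
Lemma m_sym x y : d x y = d y x. Proof. apply Hm. Qed.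
Lemma m_tri x y z : d x z <= d x y + d y z. Proof. apply Hm. Qed.

Lemma baire_step (A : X -> Prop) c r : nowhere_dense d A -> 0 < r ->
  exists c' r', 0 < r' /\ (forall y, d c' y <= r' -> d c y < r /\ ~ A y).
Proof.
  intros HA Hr.
  assert (exists x, d c x < r /\ ~ closure d A x) as [x [Hx Hncl]].
  { apply NNPP. intros H. apply HA. exists (fun y => d c y < r). split; [|split].
    - intros y Hy. exists (r - d c y). split. lra. intros z Hz.
      pose proof (m_tri c y z). lra.
    - exists c. rewrite m_refl. auto.
    - intros y Hy. apply NNPP. intros Hn. apply H. exists y. auto. }
  assert (exists eps, 0 < eps /\ forall y, A y -> ~ d x y < eps) as [eps [Heps Hy]].
  { apply NNPP. intros H. apply Hncl. intros eps Heps. apply NNPP. intros H2.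
    apply H. exists eps. split; auto. intros y Ay Hd. apply H2. eauto. }
  exists x, (Rmin eps (r - d c x) / 2). split.
  - unfold Rdiv. apply Rmult_lt_0_compat. 
    apply Rmin_glb_lt; lra. lra.
  - intros y Hdy. pose proof (Rmin_l eps (r - d c x)). pose proof (Rmin_r eps (r - d c x)).
    pose proof (m_nonneg x y).
    assert (0 < Rmin eps (r - d c x)) by (apply Rmin_glb_lt; lra).
    split.
    + pose proof (m_tri c x y). lra.
    + intros Ay. apply (Hy y Ay). lra.
Qed.

Lemma baire : compact_space d -> (exists x : X, True) -> ~ meager d (fun _ => True).
Proof.
  intros Hc [x0 _] [An [Hnd Hcov]].
  assert (Hstep : forall n (p : X * R), exists q : X * R, 0 < snd p -> 0 < snd q /\
      forall y, d (fst q) y <= snd q -> d (fst p) y < snd p /\ ~ An n y).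
  { intros n [c r]. destruct (Rlt_dec 0 r) as [Hr|Hr].
    - destruct (baire_step (An n) c r (Hnd n) Hr) as [c' [r' H]]. exists (c', r'). auto.
    - exists (c, r). intros; simpl in *; lra. }
  set (step := fun n p => proj1_sig (constructive_indefinite_description _ (Hstep n p))).
  assert (Hst : forall n p, 0 < snd p -> 0 < snd (step n p) /\
      forall y, d (fst (step n p)) y <= snd (step n p) -> d (fst p) y < snd p /\ ~ An n y).
  { intros n p. unfold step. destruct (constructive_indefinite_description _ (Hstep n p)). auto. }
  set (sq := fix sq (n : nat) : X * R := match n with O => (x0, 1) | S n => step n (sq n) end).
  assert (Hpos : forall n, 0 < snd (sq n)).
  { induction n. simpl. lra. apply Hst. auto. }
  assert (Hnest : forall n m y, (n <= m)%nat -> d (fst (sq m)) y <= snd (sq m) -> d (fst (sq n)) y <= snd (sq n)).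
  { intros n m y L. induction L; auto. intros H. apply IHL.
    destruct (Hst m (sq m) (Hpos m)) as [_ H2]. destruct (H2 y H). lra. }
  assert (exists y, forall n, d (fst (sq n)) y <= snd (sq n)) as [y Hy].
  { apply NNPP. intros H.
    destruct (Hc nat (fun n y => snd (sq n) < d (fst (sq n)) y)) as [l Hl].
    - intros n y Hy. exists (d (fst (sq n)) y - snd (sq n)). split. lra.
      intros z Hz. pose proof (m_tri (fst (sq n)) y z). rewrite (m_sym y z) in *.
      pose proof (m_tri (fst (sq n)) z y). lra.
    - intros y. apply NNPP. intros H2. apply H. exists y. intros n. apply Rnot_lt_le.
      intros H3. apply H2. eauto.
    - set (N := fold_right max 0%nat l).
      assert (HN : forall i, In i l -> (i <= N)%nat).
      { unfold N. clear. induction l; simpl; intros i Hi. tauto.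
        destruct Hi. subst. lia. specialize (IHl i H). lia. }
      destruct (Hl (fst (sq N))) as [i [Hi Ui]].
      pose proof (Hnest i N (fst (sq N)) (HN i Hi)). rewrite m_refl in H0.
      specialize (H0 (Rlt_le _ _ (Hpos N))). lra. }
  destruct (Hcov y I) as [n Hn].
  destruct (Hst n (sq n) (Hpos n)) as [_ H2]. apply (H2 y (Hy (S n))). auto.
Qed.
End Baire.


Definition dist4 {T : Type} (a b c d : T) :=
  a <> b /\ a <> c /\ a <> d /\ b <> c /\ b <> d /\ c <> d.

Lemma fin_min (M : nat) (Q : nat -> R -> Prop) :
  (forall s r r', 0 < r' <= r -> Q s r -> Q s r') ->
  (forall s, (s < M)%nat -> exists r, 0 < r /\ Q s r) ->
  exists r, 0 < r /\ forall s, (s < M)%nat -> Q s r.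
Proof.
  intros Hmono. induction M as [|M IH]; intros H.
  - exists 1. split. lra. intros; lia.
  - destruct IH as [r1 [H1 H1']]. intros s Hs; apply H; lia.
    destruct (H M) as [r2 [H2 H2']]. lia.
    exists (Rmin r1 r2). split. apply Rmin_glb_lt; auto.
    intros s Hs. destruct (Nat.eq_dec s M).
    + subst. apply Hmono with r2; auto. split. apply Rmin_glb_lt; auto. apply Rmin_r.
    + apply Hmono with r1; auto. split. apply Rmin_glb_lt; auto. apply Rmin_l. apply H1'. lia.
Qed.

Section Scheme.
Variables (G : Type) (mul : G -> G -> G) (inv : G -> G) (e : G) (d : G -> G -> R).
Hypothesis Hassoc : forall x y z, mul x (mul y z) = mul (mul x y) z.
Hypothesis Hid : forall x, mul e x = x /\ mul x e = x.
Hypothesis Hinv : forall x, mul (inv x) x = e /\ mul x (inv x) = e.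
Hypothesis Hmet : is_metric d.
Hypothesis Hcont : forall x y eps, 0 < eps -> exists delta, 0 < delta /\
     forall x' y', d x x' < delta -> d y y' < delta -> d (mul x y) (mul x' y') < eps.
Hypothesis Hcompl : complete_metric d.
Hypothesis Hcomm : forall x y, mul x y = mul y x.
Hypothesis Hperf : forall c rho, 0 < rho -> exists x, x <> c /\ d c x < rho.

Lemma g_nonneg x y : 0 <= d x y. Proof. apply Hmet. Qed.
Lemma g_refl x : d x x = 0. Proof. apply (proj1 (proj2 Hmet)). auto. Qed.
Lemma g_eq x y : d x y = 0 -> x = y. Proof. apply (proj1 (proj2 Hmet)). Qed.
Lemma g_sym x y : d x y = d y x. Proof. apply Hmet. Qed.
Lemma g_tri x y z : d x z <= d x y + d y z. Proof. apply Hmet. Qed.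

Lemma solve_l x y z : mul x y = z -> x = mul z (inv y).
Proof.
  intros H. subst. rewrite <- Hassoc. rewrite (proj2 (Hinv y)). symmetry. apply Hid.
Qed.

Definition sep (c : G) (S : G -> Prop) := exists delta, 0 < delta /\ forall y, S y -> y = c \/ delta <= d c y.

Lemma sep_single c y0 : sep c (fun y => y = y0).
Proof.
  destruct (classic (y0 = c)) as [E|E].
  - exists 1. split. lra. intros y Hy. left. congruence.
  - exists (d c y0). split.
    + destruct (g_nonneg c y0) as [H|H]; auto. exfalso. apply E. symmetry. apply g_eq. auto.
    + intros y Hy. subst. right. lra.
Qed.

Lemma sep_union c (N : nat) (S : nat -> G -> Prop) :
  (forall i, (i < N)%nat -> sep c (S i)) -> sep c (fun y => exists i, (i < N)%nat /\ S i y).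
Proof.
  induction N as [|N IH]; intros H.
  - exists 1. split. lra. intros y [i [Hi _]]. lia.
  - destruct IH as [d1 [H1 H1']]. intros; apply H; lia.
    destruct (H N) as [d2 [H2 H2']]. lia.
    exists (Rmin d1 d2). split. apply Rmin_glb_lt; auto.
    intros y [i [Hi Si]]. destruct (Nat.eq_dec i N).
    + subst. destruct (H2' y Si); auto. right. pose proof (Rmin_r d1 d2). lra.
    + destruct (H1' y) as [E|E]. exists i. split; auto. lia. auto. right.
      pose proof (Rmin_l d1 d2). lra.
Qed.

Lemma sep_or c S1 S2 : sep c S1 -> sep c S2 -> sep c (fun y => S1 y \/ S2 y).
Proof.
  intros [d1 [H1 H1']] [d2 [H2 H2']]. exists (Rmin d1 d2). split. apply Rmin_glb_lt; auto.
  intros y [Sy|Sy]; [destruct (H1' y Sy)|destruct (H2' y Sy)]; auto; right;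
  [pose proof (Rmin_l d1 d2)|pose proof (Rmin_r d1 d2)]; lra.
Qed.

Lemma sep_avoid c S rho : sep c S -> 0 < rho -> exists x, d c x < rho /\ ~ S x.
Proof.
  intros [dl [Hd Hd']] Hr. destruct (Hperf c (Rmin rho dl)) as [x [Hx1 Hx2]].
  apply Rmin_glb_lt; auto.
  exists x. split. pose proof (Rmin_l rho dl). lra.
  intros Sx. destruct (Hd' x Sx) as [E|E]. auto. pose proof (Rmin_r rho dl). lra.
Qed.

Definition updp (p : nat -> G) (k : nat) (x : G) : nat -> G :=
  fun j => if Nat.eqb j k then x else p j.

Definition Good (k : nat) (p : nat -> G) :=
  (forall i j, (i < k)%nat -> (j < k)%nat -> i <> j -> p i <> p j) /\
  (forall s1 s2 s3 s4, (s1 < k)%nat -> (s2 < k)%nat -> (s3 < k)%nat -> (s4 < k)%nat ->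
     dist4 s1 s2 s3 s4 -> mul (p s1) (p s2) <> mul (p s3) (p s4)).

Lemma points_exist (c : nat -> G) (par : nat -> nat) (r : R) : 0 < r ->
  forall k, exists p : nat -> G, (forall j, (j < k)%nat -> d (c (par j)) (p j) < r) /\ Good k p.
Proof.
  intros Hr. induction k as [|k IH].
  - exists c. split. intros; lia. split; intros; lia.
  - destruct IH as [p [Hp1 [Hp2 Hp3]]].
    set (S := fun y => (exists a, (a < k)%nat /\ y = p a) \/
       (exists a, (a < k)%nat /\ exists b, (b < k)%nat /\ exists b', (b' < k)%nat /\
           y = mul (mul (p b) (p b')) (inv (p a)))).
    assert (Hsep : sep (c (par k)) S).
    { apply sep_or.
      - apply sep_union. intros. apply sep_single.
      - apply sep_union. intros a _. 
        apply (sep_union _ k (fun b y => exists b', (b' < k)%nat /\ y = mul (mul (p b) (p b')) (inv (p a)))).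
        intros b _. apply sep_union. intros. apply sep_single. }
    destruct (sep_avoid _ _ _ Hsep Hr) as [x [Hx1 Hx2]].
    assert (Key : forall a b b', (a < k)%nat -> (b < k)%nat -> (b' < k)%nat ->
       mul x (p a) <> mul (p b) (p b')).
    { intros a b b' Ha Hb Hb' E. apply Hx2. right. exists a. split; auto. exists b. split; auto.
      exists b'. split; auto. apply solve_l. auto. }
    assert (Key2 : forall a, (a < k)%nat -> x <> p a).
    { intros a Ha E. apply Hx2. left. eauto. }
    exists (updp p k x). split; [|split].
    + intros j Hj. unfold updp. destruct (Nat.eqb_spec j k). subst; auto. apply Hp1. lia.
    + intros i j Hi Hj Hij. unfold updp.
      destruct (Nat.eqb_spec i k); destruct (Nat.eqb_spec j k); subst; try lia.
      * apply Key2. lia.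
      * intro E. apply (Key2 i). lia. auto.
      * apply Hp2; lia.
    + intros s1 s2 s3 s4 H1 H2 H3 H4 [D1 [D2 [D3 [D4 [D5 D6]]]]]. unfold updp.
      destruct (Nat.eqb_spec s1 k); destruct (Nat.eqb_spec s2 k);
      destruct (Nat.eqb_spec s3 k); destruct (Nat.eqb_spec s4 k); subst; try lia.
      * apply Key; lia.
      * rewrite Hcomm. apply Key; lia.
      * intro E. symmetry in E. revert E. apply Key; lia.
      * intro E. symmetry in E. rewrite Hcomm in E. revert E. apply Key; lia.
      * apply Hp3; try lia. repeat split; auto.
Qed.

Definition Disj (M : nat) (c : nat -> G) (r : R) :=
  forall i j, (i < M)%nat -> (j < M)%nat -> i <> j ->
    forall x y, d (c i) x <= r -> d (c j) y <= r -> x <> y.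

Definition Quad (M : nat) (c : nat -> G) (r : R) :=
  forall s1 s2 s3 s4, (s1 < M)%nat -> (s2 < M)%nat -> (s3 < M)%nat -> (s4 < M)%nat ->
    dist4 s1 s2 s3 s4 -> forall x1 x2 x3 x4, d (c s1) x1 <= r -> d (c s2) x2 <= r ->
    d (c s3) x3 <= r -> d (c s4) x4 <= r -> mul x1 x2 <> mul x3 x4.

Lemma level_step (M : nat) (c : nat -> G) (par : nat -> nat) (r : R) : 0 < r ->
  exists c' r', 0 < r' /\ r' <= r / 2 /\
    (forall j, (j < M)%nat -> d (c (par j)) (c' j) < r / 2) /\
    Disj M c' r' /\ Quad M c' r'.
Proof.
  intros Hr. destruct (points_exist c par (r/2) ltac:(lra) M) as [p [Hp1 [Hp2 Hp3]]].
  assert (HD : exists r1, 0 < r1 /\ forall i, (i < M)%nat -> forall j, (j < M)%nat -> i <> j ->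
    forall x y, d (p i) x <= r1 -> d (p j) y <= r1 -> x <> y).
  { apply fin_min.
    - intros s r0 r' [A B] H j Hj Hij x y Hx Hy. apply (H j Hj Hij); lra.
    - intros i Hi. apply fin_min.
      + intros s r0 r' [A B] H Hij x y Hx Hy. apply (H Hij); lra.
      + intros j Hj. destruct (Nat.eq_dec i j) as [E|E].
        * exists 1. split. lra. tauto.
        * pose proof (Hp2 i j Hi Hj E) as Hne.
          assert (0 < d (p i) (p j)).
          { destruct (g_nonneg (p i) (p j)); auto. exfalso. apply Hne. apply g_eq. auto. }
          exists (d (p i) (p j) / 3). split. lra. intros _ x y Hx Hy Exy. subst y.
          pose proof (g_tri (p i) x (p j)) as HT. rewrite (g_sym x (p j)) in HT. lra. }
  assert (HQ : exists r2, 0 < r2 /\ forall s1, (s1 < M)%nat -> forall s2, (s2 < M)%nat ->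
    forall s3, (s3 < M)%nat -> forall s4, (s4 < M)%nat ->
    dist4 s1 s2 s3 s4 -> forall x1 x2 x3 x4, d (p s1) x1 <= r2 -> d (p s2) x2 <= r2 ->
    d (p s3) x3 <= r2 -> d (p s4) x4 <= r2 -> mul x1 x2 <> mul x3 x4).
  { apply fin_min.
    { intros s r0 r' [A B] H s2 H2 s3 H3 s4 H4 D x1 x2 x3 x4 ? ? ? ?.
      apply (H s2 H2 s3 H3 s4 H4 D); lra. }
    intros s1 H1. apply fin_min.
    { intros s r0 r' [A B] H s3 H3 s4 H4 D x1 x2 x3 x4 ? ? ? ?.
      apply (H s3 H3 s4 H4 D); lra. }
    intros s2 H2. apply fin_min.
    { intros s r0 r' [A B] H s4 H4 D x1 x2 x3 x4 ? ? ? ?.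
      apply (H s4 H4 D); lra. }
    intros s3 H3. apply fin_min.
    { intros s r0 r' [A B] H D x1 x2 x3 x4 ? ? ? ?. apply (H D); lra. }
    intros s4 H4. destruct (classic (dist4 s1 s2 s3 s4)) as [D|D]; [|exists 1; split; [lra|tauto]].
    pose proof (Hp3 s1 s2 s3 s4 H1 H2 H3 H4 D) as Hne.
    set (dl := d (mul (p s1) (p s2)) (mul (p s3) (p s4))).
    assert (0 < dl).
    { destruct (g_nonneg (mul (p s1) (p s2)) (mul (p s3) (p s4))); auto. exfalso. apply Hne. apply g_eq. auto. }
    destruct (Hcont (p s1) (p s2) (dl/2) ltac:(lra)) as [e1 [He1 He1']].
    destruct (Hcont (p s3) (p s4) (dl/2) ltac:(lra)) as [e2 [He2 He2']].
    exists (Rmin e1 e2 / 2). split.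
    { assert (0 < Rmin e1 e2) by (apply Rmin_glb_lt; auto). lra. }
    intros _ x1 x2 x3 x4 Hx1 Hx2 Hx3 Hx4 E.
    pose proof (Rmin_l e1 e2). pose proof (Rmin_r e1 e2).
    assert (0 < Rmin e1 e2) by (apply Rmin_glb_lt; auto).
    assert (A1 : d (mul (p s1) (p s2)) (mul x1 x2) < dl/2) by (apply He1'; lra).
    assert (A2 : d (mul (p s3) (p s4)) (mul x3 x4) < dl/2) by (apply He2'; lra).
    rewrite E in A1. pose proof (g_tri (mul (p s1) (p s2)) (mul x3 x4) (mul (p s3) (p s4))) as HT.
    rewrite (g_sym (mul x3 x4)) in HT. unfold dl in *. lra. }
  destruct HD as [r1 [Hr1 HD]]. destruct HQ as [r2 [Hr2 HQ]].
  exists p, (Rmin (Rmin r1 r2) (r/2)). 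
  pose proof (Rmin_l (Rmin r1 r2) (r/2)). pose proof (Rmin_r (Rmin r1 r2) (r/2)).
  pose proof (Rmin_l r1 r2). pose proof (Rmin_r r1 r2).
  assert (0 < Rmin (Rmin r1 r2) (r/2)) by (repeat apply Rmin_glb_lt; lra).
  split; [auto|split; [auto|split; [auto|split]]].
  - intros i j Hi Hj Hij x y Hx Hy. apply (HD i Hi j Hj Hij); lra.
  - intros s1 s2 s3 s4 Q1 Q2 Q3 Q4 D x1 x2 x3 x4 ? ? ? ?. apply (HQ s1 Q1 s2 Q2 s3 Q3 s4 Q4 D); lra.
Qed.

Fixpoint idx (n : nat) (a : K) : nat :=
  match n with O => O | S n => (2 * idx n a + (if a n then 1 else 0))%nat end.

Lemma idx_lt n a : (idx n a < 2 ^ n)%nat.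
Proof. induction n; simpl. lia. destruct (a n); lia. Qed.

Lemma idx_div n a : (idx (S n) a / 2 = idx n a)%nat.
Proof. cbn [idx]. symmetry. apply (Nat.div_unique _ 2 _ (if a n then 1%nat else 0%nat)); destruct (a n); lia. Qed.

Lemma idx_agree n a b : agree n a b -> idx n a = idx n b.
Proof.
  induction n; simpl; intros H; auto. rewrite IHn. rewrite (H n). auto. lia.
  apply agree_mono with (S n); auto.
Qed.

Lemma idx_diff k a b : a k <> b k -> idx (S k) a <> idx (S k) b.
Proof. simpl. destruct (a k), (b k); try congruence; lia. Qed.

Lemma idx_up n m a b : (n <= m)%nat -> idx n a <> idx n b -> idx m a <> idx m b.
Proof.
  intros L. induction L; auto. intros H E. apply IHL; auto.
  rewrite <- (idx_div m a), <- (idx_div m b), E. auto.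
Qed.

Lemma sep_level a b : a <> b -> exists n, idx (S n) a <> idx (S n) b.
Proof. intros H. destruct (first_diff a b H) as [m [Hm _]]. exists m. apply idx_diff; auto. Qed.

Lemma step_ex : forall (n : nat) (cr : (nat -> G) * R), exists q : (nat -> G) * R,
  0 < snd cr -> 0 < snd q /\ snd q <= snd cr / 2 /\
   (forall j, (j < 2 ^ S n)%nat -> d (fst cr (j / 2)%nat) (fst q j) < snd cr / 2) /\
   Disj (2 ^ S n) (fst q) (snd q) /\ Quad (2 ^ S n) (fst q) (snd q).
Proof.
  intros n [c r]. simpl. destruct (Rlt_dec 0 r) as [Hr|Hr].
  - destruct (level_step (2 ^ S n) c (fun j => (j / 2)%nat) r Hr) as [c' [r' H]].
    exists (c', r'). simpl. auto.
  - exists (c, r). intros; simpl in *; lra.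
Qed.

Definition step n cr := proj1_sig (constructive_indefinite_description _ (step_ex n cr)).

Lemma step_spec n cr : 0 < snd cr -> 0 < snd (step n cr) /\ snd (step n cr) <= snd cr / 2 /\
   (forall j, (j < 2 ^ S n)%nat -> d (fst cr (j / 2)%nat) (fst (step n cr) j) < snd cr / 2) /\
   Disj (2 ^ S n) (fst (step n cr)) (snd (step n cr)) /\ Quad (2 ^ S n) (fst (step n cr)) (snd (step n cr)).
Proof. unfold step. destruct (constructive_indefinite_description _ (step_ex n cr)). auto. Qed.

Fixpoint lev (n : nat) : (nat -> G) * R :=
  match n with O => (fun _ => e, 1) | S n => step n (lev n) end.

Definition cc n := fst (lev n).
Definition rr n := snd (lev n).

Lemma rr_pos n : 0 < rr n.
Proof. induction n. unfold rr; simpl; lra. apply (step_spec n (lev n) IHn). Qed.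

Lemma lev_props n : rr (S n) <= rr n / 2 /\
   (forall j, (j < 2 ^ S n)%nat -> d (cc n (j / 2)%nat) (cc (S n) j) < rr n / 2) /\
   Disj (2 ^ S n) (cc (S n)) (rr (S n)) /\ Quad (2 ^ S n) (cc (S n)) (rr (S n)).
Proof. apply (step_spec n (lev n) (rr_pos n)). Qed.

Lemma rr_small n : rr n <= / 2 ^ n.
Proof.
  induction n. unfold rr; simpl; lra.
  destruct (lev_props n) as [H _]. simpl pow. rewrite Rinv_mult. lra.
Qed.

Definition zz n a := cc n (idx n a).

Lemma zz_chain a n m : (n <= m)%nat -> d (zz n a) (zz m a) <= rr n - rr m.
Proof.
  intros L. induction L.
  - rewrite g_refl. lra.
  - destruct (lev_props m) as [H1 [H2 _]].
    pose proof (H2 (idx (S m) a) (idx_lt (S m) a)). rewrite idx_div in H.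
    pose proof (g_tri (zz n a) (zz m a) (zz (S m) a)). unfold zz in *. lra.
Qed.

Lemma zz_cauchy a : cauchy_seq d (fun n => zz n a).
Proof.
  intros eps Heps. destruct (small_pow2 (eps/2) ltac:(lra)) as [N HN]. exists N.
  intros m n Hm Hn. pose proof (zz_chain a N m Hm). pose proof (zz_chain a N n Hn).
  pose proof (g_tri (zz m a) (zz N a) (zz n a)). rewrite (g_sym (zz m a) (zz N a)) in H1.
  pose proof (rr_small N). pose proof (rr_pos m). pose proof (rr_pos n). lra.
Qed.

Definition FF (a : K) : G := proj1_sig (constructive_indefinite_description _ (Hcompl _ (zz_cauchy a))).

Lemma le_eps x y : (forall eps, 0 < eps -> x <= y + eps) -> x <= y.
Proof. intros H. apply Rnot_lt_le. intros L. specialize (H ((x - y)/2) ltac:(lra)). lra. Qed.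

Lemma FF_close n a : d (zz n a) (FF a) <= rr n.
Proof.
  unfold FF. destruct (constructive_indefinite_description _ (Hcompl _ (zz_cauchy a))) as [l Hl]. simpl.
  apply le_eps. intros eps Heps. destruct (Hl eps Heps) as [N HN].
  pose proof (HN (max n N) ltac:(lia)). pose proof (zz_chain a n (max n N) ltac:(lia)).
  pose proof (g_tri (zz n a) (zz (max n N) a) l). pose proof (rr_pos (max n N)). lra.
Qed.

Lemma FF_cont : continuous_map dK d FF.
Proof.
  intros x eps Heps. destruct (small_pow2 (eps/2) ltac:(lra)) as [n Hn].
  exists (/ 2 ^ n). split. apply inv_pow2_pos. intros x' Hx'.
  apply dK_lt in Hx'. assert (E : zz n x = zz n x').
  { unfold zz. rewrite (idx_agree n x x'); auto. apply agree_mono with (S n); auto. }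
  pose proof (FF_close n x). pose proof (FF_close n x'). rewrite <- E in H0.
  pose proof (g_tri (FF x) (zz n x) (FF x')). rewrite (g_sym (FF x) (zz n x)) in H1.
  pose proof (rr_small n). lra.
Qed.

Lemma FF_inj a b : FF a = FF b -> a = b.
Proof.
  intros E. apply NNPP. intros Hab. destruct (sep_level a b Hab) as [n Hn].
  destruct (lev_props n) as [_ [_ [HD _]]].
  apply (HD (idx (S n) a) (idx (S n) b) (idx_lt _ _) (idx_lt _ _) Hn (FF a) (FF b)); auto;
  apply FF_close.
Qed.

Lemma FF_quad x1 x2 x3 x4 : dist4 x1 x2 x3 x4 -> mul (FF x1) (FF x2) <> mul (FF x3) (FF x4).
Proof.
  intros [D1 [D2 [D3 [D4 [D5 D6]]]]].
  destruct (sep_level _ _ D1) as [n1 N1]. destruct (sep_level _ _ D2) as [n2 N2].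
  destruct (sep_level _ _ D3) as [n3 N3]. destruct (sep_level _ _ D4) as [n4 N4].
  destruct (sep_level _ _ D5) as [n5 N5]. destruct (sep_level _ _ D6) as [n6 N6].
  set (L := max n1 (max n2 (max n3 (max n4 (max n5 n6))))).
  destruct (lev_props L) as [_ [_ [_ HQ]]].
  apply (HQ (idx (S L) x1) (idx (S L) x2) (idx (S L) x3) (idx (S L) x4));
    try apply idx_lt; try apply FF_close.
  repeat split; [apply (idx_up (S n1))|apply (idx_up (S n2))|apply (idx_up (S n3))|apply (idx_up (S n4))|apply (idx_up (S n5))|apply (idx_up (S n6))]; auto; unfold L; lia.
Qed.

Lemma cantor_scheme : exists F : K -> G, continuous_map dK d F /\ (forall a b, F a = F b -> a = b) /\
  (forall x1 x2 x3 x4, dist4 x1 x2 x3 x4 -> mul (F x1) (F x2) <> mul (F x3) (F x4)).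
Proof. exists FF. split. apply FF_cont. split. apply FF_inj. apply FF_quad. Qed.
End Scheme.


Fixpoint ssum (b : K) (m j : nat) : R :=
  match j with O => 0 | S j => (if b m then / 3 ^ (S m) else 0) + ssum b (S m) j end.

Lemma pow3_pos n : 0 < 3 ^ n. Proof. apply pow_lt. lra. Qed.

Lemma ssum_nonneg b m j : 0 <= ssum b m j.
Proof.
  revert m. induction j; intros m; simpl. lra.
  specialize (IHj (S m)). destruct (b m). pose proof (Rinv_0_lt_compat _ (pow3_pos (S m))).
  simpl in *. lra. lra.
Qed.

Lemma ssum_bound b m j : ssum b m j <= / (2 * 3 ^ m).
Proof.
  revert m. induction j; intros m; simpl.
  - left. apply Rinv_0_lt_compat. pose proof (pow3_pos m). lra.
  - specialize (IHj (S m)). simpl in IHj. pose proof (pow3_pos m).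
    assert (/ (2 * (3 * 3 ^ m)) = / (2 * 3 ^ m) / 3) as E1 by (field; lra).
    assert (/ (3 * 3 ^ m) = / (2 * 3 ^ m) * (2/3)) as E2 by (field; lra).
    pose proof (Rinv_0_lt_compat (2 * 3 ^ m) ltac:(lra)).
    destruct (b m); lra.
Qed.

Lemma ssum_split b m j1 j2 : ssum b m (j1 + j2) = ssum b m j1 + ssum b (m + j1) j2.
Proof.
  revert m. induction j1; intros m; simpl. rewrite Nat.add_0_r. lra.
  rewrite IHj1. replace (S m + j1)%nat with (m + S j1)%nat by lia. lra.
Qed.

Lemma ssum_agree b c m j : (forall k, (k < m + j)%nat -> b k = c k) -> ssum b m j = ssum c m j.
Proof.
  revert m. induction j; intros m H; simpl. auto.
  rewrite (H m) by lia. rewrite IHj; auto. intros k Hk. apply H. lia.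
Qed.

Definition Eb (b : K) := fun x => exists n, x = ssum b 0 n.

Lemma Eb_bound b : bound (Eb b).
Proof. exists (/ (2 * 3 ^ 0)). intros x [n ->]. apply ssum_bound. Qed.
Lemma Eb_ne b : exists x, Eb b x.
Proof. exists 0. exists 0%nat. reflexivity. Qed.

Definition phi (b : K) : R := proj1_sig (completeness (Eb b) (Eb_bound b) (Eb_ne b)).

Lemma phi_lub b : is_lub (Eb b) (phi b).
Proof. unfold phi. destruct completeness. auto. Qed.

Lemma phi_lt b c m : b m = true -> c m = false -> agree m b c -> phi c < phi b.
Proof.
  intros Hb Hc Ha.
  set (P := ssum b 0 m).
  assert (HP : ssum c 0 m = P). { unfold P. symmetry. apply ssum_agree. intros k Hk. apply Ha. lia. }
  assert (Hb1 : P + / 3 ^ (S m) <= phi b).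
  { destruct (phi_lub b) as [H1 _]. apply H1. exists (S m). replace (S m) with (m + 1)%nat by lia.
    rewrite ssum_split. simpl. rewrite Hb. unfold P. replace (m+1)%nat with (S m) by lia. simpl. lra. }
  assert (Hc1 : phi c <= P + / (2 * 3 ^ (S m))).
  { destruct (phi_lub c) as [_ H2]. apply H2. intros x [n ->].
    apply Rle_trans with (ssum c 0 (m + S n)).
    - replace (m + S n)%nat with (n + S m)%nat by lia. rewrite ssum_split.
      pose proof (ssum_nonneg c (0 + n) (S m)). lra.
    - rewrite ssum_split. simpl. rewrite Hc. rewrite HP. pose proof (ssum_bound c (S m) n). simpl in *. lra. }
  pose proof (pow3_pos (S m)).
  assert (/ (2 * 3 ^ S m) < / 3 ^ S m).
  { apply Rinv_lt_contravar. nra. lra. }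
  lra.
Qed.

Lemma phi_inj b c : phi b = phi c -> b = c.
Proof.
  intros E. apply NNPP. intros H. destruct (first_diff b c H) as [m [Hm Ha]].
  destruct (b m) eqn:Eb1; destruct (c m) eqn:Ec1; try congruence.
  - pose proof (phi_lt b c m Eb1 Ec1 Ha). lra.
  - pose proof (phi_lt c b m Ec1 Eb1 (agree_sym _ _ _ Ha)). lra.
Qed.

Section Card.
Variables (G : Type) (mul : G -> G -> G) (inv : G -> G) (e : G) (d : G -> G -> R).
Hypothesis HP : polish_group mul inv e d.

Lemma G_inj_R : exists iota : G -> R, forall x y, iota x = iota y -> x = y.
Proof.
  destruct HP as [_ [_ [_ [Hm [_ [[s Hs] _]]]]]].
  set (bits := fun x n => let (i, m) := Cantor.of_nat n in
                 if Rlt_dec (d x (s i)) (/ 2 ^ m) then true else false).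
  exists (fun x => phi (bits x)). intros x y E. apply phi_inj in E.
  apply NNPP. intros Hxy.
  destruct Hm as [M1 [M2 [M3 M4]]].
  assert (Hpos : 0 < d x y).
  { destruct (M1 x y); auto. exfalso. apply Hxy. apply M2. auto. }
  destruct (small_pow2 (d x y / 2) ltac:(lra)) as [m Hm].
  destruct (Hs x (/ 2 ^ m) (inv_pow2_pos m)) as [i Hi].
  assert (Hb : bits x (Cantor.to_nat (i, m)) = bits y (Cantor.to_nat (i, m))) by (rewrite E; auto).
  unfold bits in Hb. rewrite Cantor.cancel_of_to in Hb.
  destruct (Rlt_dec (d x (s i)) (/ 2 ^ m)); try tauto.
  destruct (Rlt_dec (d y (s i)) (/ 2 ^ m)); try discriminate.
  pose proof (M4 x (s i) y). rewrite (M3 (s i) y) in H. lra.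
Qed.

Lemma G_perfect : uncountable G -> forall c rho, 0 < rho -> exists x, x <> c /\ d c x < rho.
Proof.
  intros Hunc c rho Hrho. apply NNPP. intros Hno.
  assert (Hiso : forall x, d c x < rho -> x = c).
  { intros x Hx. apply NNPP. intros Hne. apply Hno. exists x. auto. }
  destruct HP as [Ha [Hid [Hinv [Hm [_ [[s Hs] [Hc _]]]]]]].
  destruct Hm as [M1 [M2 [M3 M4]]].
  assert (Hcancel : forall a x y, mul a x = mul a y -> x = y).
  { intros a x y E. assert (mul (inv a) (mul a x) = mul (inv a) (mul a y)) by congruence.
    rewrite !Ha in H. rewrite (proj1 (Hinv a)) in H. rewrite !(proj1 (Hid _)) in H. auto. }
  assert (Hdisc : forall g, exists n, s n = g).
  { intros g. set (a := mul c (inv g)).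
    assert (Eag : mul a g = c).
    { unfold a. rewrite <- Ha. rewrite (proj1 (Hinv g)). apply Hid. }
    destruct (Hc a g rho Hrho) as [dl [Hdl Hdl']].
    destruct (Hs g dl Hdl) as [n Hn]. exists n.
    assert (mul a (s n) = c).
    { apply Hiso. rewrite <- Eag at 1. apply Hdl'; auto. rewrite (proj2 (M2 a a) eq_refl). auto. }
    apply (Hcancel a). congruence. }
  apply Hunc. exists (fun g => proj1_sig (constructive_indefinite_description _ (Hdisc g))).
  intros x y E.
  destruct (constructive_indefinite_description _ (Hdisc x)) as [n1 H1].
  destruct (constructive_indefinite_description _ (Hdisc y)) as [n2 H2]. simpl in E. congruence.
Qed.

Hypothesis HWO : exists W : R -> R -> Prop,
  (forall x y, W x y \/ W y x) /\ (forall x y, W x y -> W y x -> x = y) /\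
  (forall P : R -> Prop, (exists x, P x) -> exists z, P z /\ forall x, P x -> W z x).

Definition cnt {T : Type} (A : T -> Prop) := exists f : T -> nat, forall x y, A x -> A y -> f x = f y -> x = y.

Lemma aleph1_order : CH -> exists lt : G -> G -> Prop,
  (forall x y, lt x y \/ x = y \/ lt y x) /\ (forall y, cnt (fun x => lt x y)).
Proof.
  intros HCH. destruct G_inj_R as [iota Hiota].
  destruct HWO as [W [Wtot [Wanti Wmin]]].
  set (Wl := fun x y => W x y /\ x <> y).
  assert (Wltot : forall x y, Wl x y \/ x = y \/ Wl y x).
  { intros x y. destruct (classic (x = y)); auto. destruct (Wtot x y); [left|right;right]; split; auto. }
  assert (Hpull : forall h : R -> R, (forall a b, h a = h b -> a = b) ->
     (forall y, cnt (fun x => Wl x (h (iota y)))) -> exists lt : G -> G -> Prop,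
     (forall x y, lt x y \/ x = y \/ lt y x) /\ (forall y, cnt (fun x => lt x y))).
  { intros h Hh Hc. exists (fun x y => Wl (h (iota x)) (h (iota y))). split.
    - intros x y. destruct (Wltot (h (iota x)) (h (iota y))) as [A|[A|A]]; auto 6.
    - intros y. destruct (Hc y) as [f Hf]. exists (fun x => f (h (iota x))).
      intros x1 x2 H1 H2 E. apply Hiota. apply Hh. apply Hf; auto. }
  destruct (classic (exists y, ~ cnt (fun x => Wl x y))) as [Hex|Hall].
  - destruct (Wmin _ Hex) as [m [Hm Hmmin]].
    set (A := fun x => Wl x m).
    destruct (HCH A) as [[f Hf]|[h [Hinj Hsurj]]].
    + exfalso. apply Hm. 
      exists (fun x => match excluded_middle_informative (A x) with left p => f (exist _ x p) | right _ => 0%nat end).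
      intros x y Ax Ay.
      destruct (excluded_middle_informative (A x)); [|tauto].
      destruct (excluded_middle_informative (A y)); [|tauto].
      intros E. apply Hf in E. apply (f_equal (@proj1_sig _ _)) in E. auto.
    + apply (Hpull (fun x => proj1_sig (h x))).
      * intros a b E. apply Hinj. destruct (h a), (h b). simpl in E. subst.
        f_equal. apply proof_irrelevance.
      * intros y. set (w := proj1_sig (h (iota y))).
        assert (Aw : A w) by (unfold w; destruct (h (iota y)); auto).
        apply NNPP. intros Hn. destruct Aw as [Aw1 Aw2]. apply Aw2. apply Wanti; auto.
  - apply (Hpull (fun x => x)). auto. intros y. apply NNPP. intros Hn. apply Hall. eauto.
Qed.
End Card.


Definition kcons (v : bool) (a : K) : K := fun k => match k with O => v | S k => a k end.

Lemma kcons_inj v a b : kcons v a = kcons v b -> a = b.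
Proof.
  intros E. apply functional_extensionality. intros k.
  exact (f_equal (fun f => f (S k)) E).
Qed.

Lemma kcons_neq v w a b : v <> w -> kcons v a <> kcons w b.
Proof. intros H E. apply H. exact (f_equal (fun f => f O) E). Qed.

Lemma kcons_cont {Y} (dY : Y -> Y -> R) (F : K -> Y) v :
  continuous_map dK dY F -> continuous_map dK dY (fun a => F (kcons v a)).
Proof.
  intros HF x eps Heps. destruct (HF (kcons v x) eps Heps) as [dl [Hdl Hdl']].
  destruct (small_pow2 dl Hdl) as [n Hn]. exists (/ 2 ^ n). split. apply inv_pow2_pos.
  intros x' Hx'. apply Hdl'. apply dK_lt in Hx'.
  assert (agree (S n) (kcons v x) (kcons v x')).
  { intros k Hk. destruct k; simpl; auto. apply Hx'. lia. }
  apply dK_le in H. pose proof (inv_pow2_lt n (S n) ltac:(lia)). lra.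
Qed.

Section Main.
Variables (G : Type) (mul : G -> G -> G) (inv : G -> G) (e : G) (d : G -> G -> R).
Hypothesis HP : polish_group mul inv e d.
Hypothesis Hab : abelian mul.
Hypothesis Hunc : uncountable G.
Hypothesis HWO : exists W : R -> R -> Prop,
  (forall x y, W x y \/ W y x) /\ (forall x y, W x y -> W y x -> x = y) /\
  (forall P : R -> Prop, (exists x, P x) -> exists z, P z /\ forall x, P x -> W z x).
Hypothesis HCH : CH.

Lemma main_part1 : exists X : G -> Prop,
   naively_haar_meager mul d X /\ naively_haar_meager mul d (fun y => ~ X y).
Proof.
  pose proof HP as HP'.
  destruct HP' as [Hassoc [Hid [Hinv [Hmet [Hcompl [Hsep [Hcont _]]]]]]].
  pose proof (G_perfect G mul inv e d HP Hunc) as Hperf.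
  edestruct (cantor_scheme G mul inv e d) as [F [HFc [HFi HFq]]]; eauto.
  destruct (aleph1_order G mul inv e d HP HWO HCH) as [lt [Hlt Hcnt]].
  set (fC := fun a => F (kcons false a)).
  set (fD := fun a => F (kcons true a)).
  assert (Hsw : forall w p q, mul (mul w p) q = mul (mul w q) p).
  { intros. rewrite <- !Hassoc. f_equal. apply Hab. }
  assert (Hpair : forall v1 v2 a1 a2 b1 b2 w, v1 <> v2 ->
     F (kcons v1 a1) = mul w (F (kcons v2 b1)) -> F (kcons v1 a2) = mul w (F (kcons v2 b2)) -> a1 = a2).
  { intros v1 v2 a1 a2 b1 b2 w Hv E1 E2. apply NNPP. intros Hne.
    destruct (classic (b1 = b2)) as [Eb|Eb].
    - subst. apply Hne. apply kcons_inj with v1. apply HFi. congruence.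
    - apply (HFq (kcons v1 a1) (kcons v2 b2) (kcons v1 a2) (kcons v2 b1)).
      + repeat split; try (apply kcons_neq; congruence);
        intro E; apply kcons_inj in E; congruence.
      + rewrite E1, E2. apply Hsw. }
  assert (Hsolve : forall u x y, y = mul u x -> x = mul (inv u) y).
  { intros u x y ->. rewrite Hassoc. rewrite (proj1 (Hinv u)). symmetry. apply Hid. }
  assert (Hsolve2 : forall u x y, x = mul (inv u) y -> y = mul u x).
  { intros u x y ->. rewrite Hassoc. rewrite (proj2 (Hinv u)). symmetry. apply Hid. }
  assert (Htr : forall g h x, mul (mul g x) h = mul (mul g h) x).
  { intros. apply Hsw. }
  set (X := fun y => exists beta b, y = mul beta (fD b) /\
                 forall alpha, (lt alpha beta \/ alpha = beta) -> forall a, y <> mul alpha (fC a)).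
  assert (HK : is_metric dK /\ compact_space dK /\ (exists k : K, True)).
  { split. apply dK_metric. split. apply dK_compact. exists (fun _ => false). auto. }
  exists X. split.
  - exists K, dK, fC. destruct HK as [HK1 [HK2 HK3]].
    split; [auto|split; [auto|split; [auto|split]]].
    + apply kcons_cont. auto.
    + intros g h. set (u := mul g h). set (w := inv u).
      destruct (Hcnt w) as [fw Hfw].
      exists (fun n k => exists beta b, lt beta w /\ fw beta = n /\ mul w (fC k) = mul beta (fD b)).
      split.
      * intros n. apply subsingleton_nd. intros k1 k2 [b1 [c1 [L1 [N1 E1]]]] [b2 [c2 [L2 [N2 E2]]]].
        assert (b1 = b2) by (apply Hfw; auto; congruence). subst b2.
        apply (Hpair false true k1 k2 c1 c2 (mul u b1)); [congruence| |].
        -- symmetry in E1. apply Hsolve2 in E1. rewrite <- Hassoc. exact E1.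
        -- symmetry in E2. apply Hsolve2 in E2. rewrite <- Hassoc. exact E2.
      * intros k [x [Xx Ek]]. rewrite Htr in Ek. fold u in Ek. apply Hsolve in Ek. fold w in Ek.
        destruct Xx as [beta [b [Eb Hb]]].
        assert (lt beta w).
        { destruct (Hlt beta w) as [A|[A|A]]; auto; exfalso;
          apply (Hb w) with k; auto; congruence. }
        exists (fw beta), beta, b. repeat split; auto. congruence.
  - exists K, dK, fD. destruct HK as [HK1 [HK2 HK3]].
    split; [auto|split; [auto|split; [auto|split]]].
    + apply kcons_cont. auto.
    + intros g h. set (u := mul g h). set (w := inv u).
      destruct (Hcnt w) as [fw Hfw].
      exists (fun n k => exists alpha a, ((alpha = w /\ n = 0%nat) \/ (lt alpha w /\ n = S (fw alpha))) /\
                 mul w (fD k) = mul alpha (fC a)).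
      split.
      * intros n. apply subsingleton_nd. intros k1 k2 [a1 [c1 [I1 E1]]] [a2 [c2 [I2 E2]]].
        assert (a1 = a2).
        { destruct I1 as [[A1 B1]|[A1 B1]]; destruct I2 as [[A2 B2]|[A2 B2]]; subst; try congruence.
          all: apply Hfw; auto; congruence. }
        subst a2.
        apply (Hpair true false k1 k2 c1 c2 (mul u a1)); [congruence| |].
        -- symmetry in E1. apply Hsolve2 in E1. rewrite <- Hassoc. exact E1.
        -- symmetry in E2. apply Hsolve2 in E2. rewrite <- Hassoc. exact E2.
      * intros k [x [Xx Ek]]. rewrite Htr in Ek. fold u in Ek. apply Hsolve in Ek. fold w in Ek.
        assert (exists alpha a, (lt alpha w \/ alpha = w) /\ x = mul alpha (fC a)) as [alpha [a [Ha Ea]]].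
        { apply NNPP. intros Hn. apply Xx. exists w, k. split; auto. intros alpha Ha a Ea.
          apply Hn. eauto. }
        destruct Ha as [Ha|Ha].
        -- exists (S (fw alpha)), alpha, a. split; auto. congruence.
        -- exists 0%nat, alpha, a. split; auto. congruence.
Qed.

Lemma main_part2 : ~ (forall A B : G -> Prop,
          naively_haar_meager mul d A -> naively_haar_meager mul d B ->
          naively_haar_meager mul d (fun y => A y \/ B y)).
Proof.
  intros H. destruct main_part1 as [X [H1 H2]].
  destruct (H _ _ H1 H2) as [K' [dK' [f [Hm [Hc [Hne [_ Hme]]]]]]].
  destruct HP as [_ [Hid _]].
  apply (baire K' dK' Hm Hc Hne).
  destruct (Hme e e) as [An [Hnd Hcov]]. exists An. split; auto.
  intros k _. apply Hcov. exists (f k). split. apply classic.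
  rewrite (proj1 (Hid _)). rewrite (proj2 (Hid _)). auto.
Qed.
End Main.

Theorem proposition3p6 :
  CH ->
  forall (G : Type) (mul : G -> G -> G) (inv : G -> G) (e : G)
         (d : G -> G -> R),
    polish_group mul inv e d -> abelian mul -> uncountable G ->
    (exists X : G -> Prop,
        naively_haar_meager mul d X /\
        naively_haar_meager mul d (fun y => ~ X y)) /\
    ~ (forall A B : G -> Prop,
          naively_haar_meager mul d A -> naively_haar_meager mul d B ->
          naively_haar_meager mul d (fun y => A y \/ B y)).
Proof.
  intros HCH G mul inv e d HP Hab Hunc. split.
  - exact (main_part1 G mul inv e d HP Hab Hunc wo_R HCH).
  - exact (main_part2 G mul inv e d HP Hab Hunc wo_R HCH).
Qed.
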